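(* Let $A=(a_{n,k})$ be a real matrix with $a_{n,k}\ge0$ and $\sum_{k=0}^\infty a_{n,k}=1$ for every $n$, let $r\in\mathbb{N}$, $n\ge0$, and let $t\in\mathbb{R}$ with $t\neq\frac{2l\pi}{r}$ for all $l\in\mathbb{Z}$. Then $$\left|\sum_{k=0}^{\infty}a_{n,k}\widetilde{D^{\circ}}_{k,1}(t)\right|\le\frac{1}{2\left|\sin\frac t2\sin\frac{rt}2\right|}\left(A_{n,r}+\sum_{k=0}^{r-1}a_{n,k}\right)\le\frac{1}{\left|\sin\frac t2\sin\frac{rt}2\right|}A_{n,r}.$$
   Context: $\widetilde{D^{\circ}}_{k,1}(t)=\dfrac{\cos\frac{(2k+1)t}{2}}{2\sin\frac t2}$ and $A_{n,r}=\sum_{k=0}^\infty|a_{n,k}-a_{n,k+r}|$. *)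

(* Defs.v *)
From Stdlib Require Import Reals.
From Coquelicot Require Import Coquelicot.
Open Scope R_scope.

Definition Dconj (k : nat) (t : R) : R :=
  cos ((2 * INR k + 1) * t / 2) / (2 * sin (t / 2)).

Definition A_nr (a : nat -> nat -> R) (n r : nat) : R :=
  Series (fun k => Rabs (a n k - a n (k + r)%nat)).

(* Main.v *)
Require Import Defs.
From Stdlib Require Import Reals Lra Lia.
From Coquelicot Require Import Coquelicot.
Open Scope R_scope.

Lemma exs_le (u : nat -> R) (v : nat -> R) :
  (forall k, Rabs (u k) <= v k) -> ex_series v -> ex_series u.
Proof. intros H Hv. apply (ex_series_le u v); auto. Qed.

Lemma exs_minus (u v : nat -> R) : ex_series u -> ex_series v ->
  ex_series (fun k => u k - v k).
Proof. intros Hu Hv. exact (ex_series_minus u v Hu Hv). Qed.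

Lemma exs_plus (u v : nat -> R) : ex_series u -> ex_series v ->
  ex_series (fun k => u k + v k).
Proof. intros Hu Hv. exact (ex_series_plus u v Hu Hv). Qed.

Theorem lemma5 (a : nat -> nat -> R) (r n : nat) (t : R)
  (Hnonneg : forall n k, 0 <= a n k)
  (Hrow : forall n, is_series (a n) 1)
  (Hr : (0 < r)%nat)
  (Ht : forall l : Z, t <> 2 * IZR l * PI / INR r) :
  Rabs (Series (fun k => a n k * Dconj k t))
    <= / (2 * Rabs (sin (t / 2) * sin (INR r * t / 2)))
       * (A_nr a n r + sum_n (a n) (r - 1))
  /\ / (2 * Rabs (sin (t / 2) * sin (INR r * t / 2)))
       * (A_nr a n r + sum_n (a n) (r - 1))
     <= / Rabs (sin (t / 2) * sin (INR r * t / 2)) * A_nr a n r.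
Proof.
  set (u := a n).
  assert (Hu0 : forall k, 0 <= u k) by (intros; apply Hnonneg).
  assert (Hex : ex_series u) by (exists 1; apply Hrow).
  assert (Hexr : ex_series (fun k => u (r + k)%nat)) by (apply ex_series_incr_n; auto).
  set (b := fun k => u k - u (k + r)%nat).
  assert (Hexb : ex_series b).
  { apply exs_minus; auto. eapply ex_series_ext; [|exact Hexr].
    intros k; simpl. f_equal; lia. }
  assert (Hexab : ex_series (fun k => Rabs (b k))).
  { apply (exs_le _ (fun k => u k + u (r + k)%nat)).
    - intros k. rewrite Rabs_Rabsolu. unfold b. replace (k + r)%nat with (r + k)%nat by lia.
      pose proof (Hu0 k). pose proof (Hu0 (r+k)%nat).
      apply Rabs_le; lra.
    - apply exs_plus; auto. }
  set (s := sum_n u (r - 1)).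
  assert (Hs : s = Series b).
  { unfold b. rewrite Series_minus; auto.
    2:{ eapply ex_series_ext; [|exact Hexr]. intros k; simpl. f_equal; lia. }
    rewrite (Series_incr_n u r Hr Hex). unfold s. rewrite sum_n_Reals.
    replace (Init.Nat.pred r) with (r - 1)%nat by lia.
    rewrite (Series_ext (fun k => u (k + r)%nat) (fun k => u (r + k)%nat)).
    2:{ intros; f_equal; lia. } lra. }
  assert (HsA : s <= A_nr a n r).
  { rewrite Hs. unfold A_nr. fold u.
    eapply Rle_trans; [apply Rle_abs|]. apply Series_Rabs; auto. }
  assert (Hr0 : INR r <> 0) by (apply not_0_INR; lia).
  set (s1 := sin (t / 2)). set (s2 := sin (INR r * t / 2)).
  assert (Hs2 : s2 <> 0).
  { intro H. apply sin_eq_0_0 in H. destruct H as [l Hl].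
    apply (Ht l). replace (2 * IZR l * PI / INR r) with (2 * (INR r * t / 2) / INR r)
      by (rewrite Hl; field; auto). field; auto. }
  assert (Hs1 : s1 <> 0).
  { intro H. apply sin_eq_0_0 in H. destruct H as [l Hl].
    apply (Ht (l * Z.of_nat r)%Z). rewrite mult_IZR, <- INR_IZR_INZ.
    apply (f_equal (fun x => 2 * x)) in Hl.
    replace t with (2 * (t/2)) by field. rewrite Hl. field. auto. }
  assert (Hp : 0 < Rabs (s1 * s2)).
  { apply Rabs_pos_lt. apply Rmult_integral_contrapositive; auto. }
  assert (Hs0 : 0 <= s).
  { unfold s. rewrite sum_n_Reals. apply cond_pos_sum. auto. }
  assert (HA0 : 0 <= A_nr a n r) by lra.
  split.
  2:{ apply Rmult_le_reg_l with (2 * Rabs (s1 * s2)). lra.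
      field_simplify; try lra. }
  set (c := fun k => cos ((2 * INR k + 1) * t / 2)).
  set (g := fun k => sin ((2 * INR k + 1) * t / 2 - INR r * t / 2)).
  assert (Hc : forall k, Rabs (c k) <= 1) by (intros; apply Rabs_le, COS_bound).
  assert (Hg : forall k, Rabs (g k) <= 1) by (intros; apply Rabs_le, SIN_bound).
  assert (Hbd : forall (h : nat -> R), (forall k, Rabs (h k) <= 1) ->
     ex_series (fun k => u k * h k)).
  { intros h Hh. apply (exs_le _ u); auto. intros k. rewrite Rabs_mult.
    rewrite (Rabs_right (u k)) by (apply Rle_ge; auto).
    pose proof (Hu0 k). pose proof (Hh k). nra. }
  assert (Hcg : forall k, 2 * s2 * c k = g (k + r)%nat - g k).
  { intros k. unfold c, g, s2. rewrite plus_INR.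
    replace ((2 * (INR k + INR r) + 1) * t / 2 - INR r * t / 2)
      with ((2 * INR k + 1) * t / 2 + INR r * t / 2) by field.
    rewrite sin_minus, sin_plus. ring. }
  set (X := Series (fun k => u k * c k)).
  assert (HX : 2 * s2 * X = Series (fun k => b k * g (k + r)%nat)
                            - sum_n (fun k => u k * g k) (r - 1)).
  { unfold X. rewrite <- Series_scal_l.
    rewrite (Series_ext _ (fun k => u k * g (k + r)%nat - u k * g k)).
    2:{ intros k. replace (u k * g (k+r)%nat - u k * g k) with (u k * (g (k+r)%nat - g k)) by ring. rewrite <- Hcg. ring. }
    rewrite Series_minus.
    2:{ apply (Hbd (fun k => g (k + r)%nat)). auto. }
    2:{ apply Hbd; auto. }
    rewrite (Series_incr_n (fun k => u k * g k) r Hr) by (apply Hbd; auto).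
    rewrite sum_n_Reals. replace (Init.Nat.pred r) with (r - 1)%nat by lia.
    unfold b. rewrite (Series_ext (fun k => (u k - u (k + r)%nat) * g (k + r)%nat)
      (fun k => u k * g (k + r)%nat - u (r + k)%nat * g (r + k)%nat)).
    2:{ intros k. replace (r + k)%nat with (k + r)%nat by lia. ring. }
    rewrite Series_minus.
    2:{ apply (Hbd (fun k => g (k + r)%nat)). auto. }
    2:{ apply ex_series_incr_n with (n := r) (a := fun k => u k * g k). apply Hbd; auto. }
    ring. }
  assert (Hbound : Rabs (2 * s2 * X) <= A_nr a n r + s).
  { rewrite HX. eapply Rle_trans; [apply Rabs_triang|]. rewrite Rabs_Ropp.
    apply Rplus_le_compat.
    - eapply Rle_trans; [apply Series_Rabs|].
      + apply (exs_le _ (fun k => Rabs (b k))); auto. intros k.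
        rewrite Rabs_Rabsolu, Rabs_mult. pose proof (Hg (k + r)%nat).
        pose proof (Rabs_pos (b k)). nra.
      + unfold A_nr. fold u. apply Series_le; auto. intros k. split. apply Rabs_pos.
        rewrite Rabs_mult. pose proof (Hg (k + r)%nat).
        pose proof (Rabs_pos (b k)). change (Rabs (b k) * Rabs (g (k + r)%nat) <= Rabs (b k)). nra.
    - unfold s. rewrite !sum_n_Reals. eapply Rle_trans; [apply Rsum_abs|].
      apply sum_Rle. intros k _. rewrite Rabs_mult.
      rewrite (Rabs_right (u k)) by (apply Rle_ge; auto).
      pose proof (Hu0 k). pose proof (Hg k). nra. }
  rewrite (Series_ext _ (fun k => u k * c k * / (2 * s1))).
  2:{ intros k. unfold Dconj, c, s1. unfold u. field. auto. }
  rewrite Series_scal_r. fold X.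
  rewrite Rabs_mult, Rabs_inv, Rabs_mult, (Rabs_right 2) by lra.
  rewrite Rabs_mult, Rabs_mult, (Rabs_right 2) in Hbound by lra.
  rewrite Rabs_mult in Hp.
  pose proof (Rabs_pos X).
  assert (0 < Rabs s1) by (apply Rabs_pos_lt; auto).
  assert (0 < Rabs s2) by (apply Rabs_pos_lt; auto).
  rewrite Rabs_mult. apply Rmult_le_reg_l with (2 * (Rabs s1 * Rabs s2)). nra.
  field_simplify; try lra.
Qed.
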